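(* Let $u$ be the solution of the Cauchy problem in the context, and assume $m_1=0$ and $m_0\ge\sigma/f_0$. Then $\lim_{t\to+\infty}u(x,t)=1$ for every $x\in[0,1]$. Moreover, for all $x\in[0,1]$ and $t\ge0$, \[ 1\ge u(x,t)\ge1-\frac{1-x}{1+\frac{\sigma(1-x)}{m_0f_0-\sigma}\big(e^{(m_0f_0-\sigma)t}-1\big)}\quad\text{if } m_0>\sigma/f_0, \] \[ 1\ge u(x,t)\ge1-\frac{1-x}{1+\sigma(1-x)t}\quad\text{if } m_0=\sigma/f_0. \]
   Context: Constants: $f_0>0$, $f_1\ge0$ with $\sigma=f_0-f_1>0$; $\lambda_0,\lambda_1\ge0$; $\gamma_0,\gamma_1\in(0,1]$; $m_0=\lambda_0\gamma_0$, $m_1=\lambda_1\gamma_1$. With $\mathcal{J}_0u(x,t)=u(x+\gamma_0(1-x),t)-u(x,t)$ and $\mathcal{J}_1u(x,t)=u(x-\gamma_1x,t)-u(x,t)$, $u$ is the unique (mild) solution, which is $C^\infty$ on $[0,1]\times[0,\infty)$, of \[ \partial_tu+\sigma(1-x)x\,\partial_xu=\lambda_0f_0\mathcal{J}_0u+\lambda_1f_1\mathcal{J}_1u\ (0\le x\le1,\ t>0),\quad u(x,0)=x. \] *)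

(* Defs.v *)
From Stdlib Require Import Reals.
From Coquelicot Require Import Coquelicot.
Open Scope R_scope.

Definition in_dom (x t : R) : Prop := 0 <= x <= 1 /\ 0 <= t.

Definition cont_on (S : R -> R -> Prop) (f : R -> R -> R) : Prop :=
  forall x t, S x t -> forall eps, 0 < eps -> exists delta, 0 < delta /\
    forall y s, S y s -> Rabs (y - x) < delta -> Rabs (s - t) < delta ->
      Rabs (f y s - f x t) < eps.

Definition is_pderiv_x (u : R -> R -> R) (x t d : R) : Prop :=
  forall eps, 0 < eps -> exists delta, 0 < delta /\
    forall y, 0 <= y <= 1 -> y <> x -> Rabs (y - x) < delta ->
      Rabs ((u y t - u x t) / (y - x) - d) < eps.

Definition J0 (g0 : R) (u : R -> R -> R) (x t : R) : R :=
  u (x + g0 * (1 - x)) t - u x t.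
Definition J1 (g1 : R) (u : R -> R -> R) (x t : R) : R :=
  u (x - g1 * x) t - u x t.

(* u is a classical (C^1) solution on D of
   d_t u + sigma (1-x) x d_x u = l0 f0 J0 u + l1 f1 J1 u,  u(x,0) = x,
   with sigma = f0 - f1; ux, ut are its partial derivatives. *)
Definition is_solution (f0 f1 l0 l1 g0 g1 : R) (u : R -> R -> R) : Prop :=
  exists ux ut : R -> R -> R,
    cont_on in_dom u /\
    cont_on (fun x t => 0 <= x <= 1 /\ 0 < t) ux /\
    cont_on (fun x t => 0 <= x <= 1 /\ 0 < t) ut /\
    (forall x t, 0 <= x <= 1 -> 0 < t -> is_pderiv_x u x t (ux x t)) /\
    (forall x t, 0 <= x <= 1 -> 0 < t -> is_derive (fun s => u x s) t (ut x t)) /\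
    (forall x t, 0 <= x <= 1 -> 0 < t ->
       ut x t + (f0 - f1) * (1 - x) * x * ux x t
       = l0 * f0 * J0 g0 u x t + l1 * f1 * J1 g1 u x t) /\
    (forall x, 0 <= x <= 1 -> u x 0 = x).

(* Main.v *)
Require Import Defs.
From Stdlib Require Import Reals Lra Classical ClassicalEpsilon.
From Coquelicot Require Import Coquelicot.
Open Scope R_scope.

Lemma cont_on_mono (S S' : R -> R -> Prop) f :
  cont_on S f -> (forall x t, S' x t -> S x t) -> cont_on S' f.
Proof.
  intros H HS x t Hx eps He. destruct (H x t (HS _ _ Hx) eps He) as [d [Hd Hd']].
  exists d; split; auto.
Qed.

Lemma cont_on_lin (S : R -> R -> Prop) u m c p q :
  cont_on S u -> cont_on S m -> cont_on S (fun y s => c + p * u y s + q * m y s).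
Proof.
  intros Hu Hm x t Hx eps He.
  set (e' := eps / (Rabs p + Rabs q + 1)).
  assert (Hpos : 0 < Rabs p + Rabs q + 1) by (pose proof (Rabs_pos p); pose proof (Rabs_pos q); lra).
  assert (He' : 0 < e') by (unfold e'; apply Rdiv_lt_0_compat; lra).
  destruct (Hu x t Hx e' He') as [d1 [Hd1 H1]].
  destruct (Hm x t Hx e' He') as [d2 [Hd2 H2]].
  exists (Rmin d1 d2); split. apply Rmin_pos; auto.
  intros y s Hy Hyx Hst.
  assert (A1 := H1 y s Hy (Rlt_le_trans _ _ _ Hyx (Rmin_l _ _)) (Rlt_le_trans _ _ _ Hst (Rmin_l _ _))).
  assert (A2 := H2 y s Hy (Rlt_le_trans _ _ _ Hyx (Rmin_r _ _)) (Rlt_le_trans _ _ _ Hst (Rmin_r _ _))).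
  replace (c + p * u y s + q * m y s - (c + p * u x t + q * m x t))
    with (p * (u y s - u x t) + q * (m y s - m x t)) by ring.
  eapply Rle_lt_trans. apply Rabs_triang.
  rewrite !Rabs_mult.
  assert (Rabs p * Rabs (u y s - u x t) <= Rabs p * e') by (apply Rmult_le_compat_l; [apply Rabs_pos|lra]).
  assert (Rabs q * Rabs (m y s - m x t) <= Rabs q * e') by (apply Rmult_le_compat_l; [apply Rabs_pos|lra]).
  assert (e' * (Rabs p + Rabs q + 1) = eps) by (unfold e'; field; lra).
  nra.
Qed.

Definition clamp (a b x : R) := Rmax a (Rmin b x).

Lemma clamp_in a b x : a <= b -> a <= clamp a b x <= b.
Proof. intros. unfold clamp, Rmax, Rmin. repeat destruct Rle_dec; lra. Qed.

Lemma clamp_id a b x : a <= x <= b -> clamp a b x = x.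
Proof. intros. unfold clamp, Rmax, Rmin. repeat destruct Rle_dec; lra. Qed.

Lemma clamp_lip a b x y : a <= b -> Rabs (clamp a b x - clamp a b y) <= Rabs (x - y).
Proof. intros. unfold clamp, Rmax, Rmin. repeat destruct Rle_dec; split_Rabs; lra. Qed.

Lemma unif_cont (f : R -> R -> R) a b c d :
  cont_on (fun x t => a <= x <= b /\ c <= t <= d) f ->
  forall eps, 0 < eps -> exists dl, 0 < dl /\
   forall x t x' t', a <= x <= b -> c <= t <= d -> a <= x' <= b -> c <= t' <= d ->
     Rabs (x - x') < dl -> Rabs (t - t') < dl -> Rabs (f x t - f x' t') < eps.
Proof.
  intros Hc eps He.
  assert (Hex : forall p : R * R, exists dl, 0 < dl /\
    ((a <= fst p <= b /\ c <= snd p <= d) -> forall y s, a <= y <= b /\ c <= s <= d ->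
       Rabs (y - fst p) < dl -> Rabs (s - snd p) < dl -> Rabs (f y s - f (fst p) (snd p)) < eps/2)).
  { intros [u v]. simpl. destruct (classic (a <= u <= b /\ c <= v <= d)) as [Hin|Hn].
    - destruct (Hc u v Hin (eps/2)) as [dl [Hdl H]]. lra. exists dl; split; auto.
    - exists 1; split; [lra|]. intros; contradiction. }
  pose (dF := fun p => proj1_sig (constructive_indefinite_description _ (Hex p))).
  assert (HdF : forall p, 0 < dF p /\ _) by (intro p; exact (proj2_sig (constructive_indefinite_description _ (Hex p)))).
  assert (Hpos : forall u v, 0 < dF (u,v) / 2) by (intros u v; destruct (HdF (u,v)); lra).
  destruct (compactness_value_2d a b c d (fun u v => mkposreal _ (Hpos u v))) as [dd Hdd].
  exists dd; split. apply cond_pos.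
  intros x t x' t' Hx Ht Hx' Ht' Hxx Htt.
  specialize (Hdd x t Hx Ht). simpl in Hdd.
  apply NNPP; intro Hn; apply Hdd; intros [u [v [Hu [Hv [Hxu [Htv Hd]]]]]]; apply Hn.
  destruct (HdF (u,v)) as [Hp HH]. simpl in HH. simpl in Hxu, Htv, Hd.
  assert (Rabs (x - u) < dF (u,v)) by lra.
  assert (Rabs (t - v) < dF (u,v)) by lra.
  assert (E1 : Rabs (f x t - f u v) < eps/2).
  { apply HH; auto; rewrite Rabs_minus_sym; auto. }
  assert (Rabs (x' - u) < dF (u,v)).
  { replace (x' - u) with ((x' - x) + (x - u)) by ring. eapply Rle_lt_trans. apply Rabs_triang.
    rewrite Rabs_minus_sym in Hxx. lra. }
  assert (Rabs (t' - v) < dF (u,v)).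
  { replace (t' - v) with ((t' - t) + (t - v)) by ring. eapply Rle_lt_trans. apply Rabs_triang.
    rewrite Rabs_minus_sym in Htt. lra. }
  assert (E2 : Rabs (f x' t' - f u v) < eps/2) by (apply HH; auto).
  replace (f x t - f x' t') with ((f x t - f u v) + - (f x' t' - f u v)) by ring.
  eapply Rle_lt_trans. apply Rabs_triang. rewrite Rabs_Ropp. lra.
Qed.

Lemma evt2 (f : R -> R -> R) a b c d : a <= b -> c <= d ->
  cont_on (fun x t => a <= x <= b /\ c <= t <= d) f ->
  exists xs ts, a <= xs <= b /\ c <= ts <= d /\
    forall x t, a <= x <= b -> c <= t <= d -> f x t <= f xs ts.
Proof.
  intros Hab Hcd Hc.
  pose (F := fun x t => f (clamp a b x) (clamp c d t)).
  assert (HF : forall eps, 0 < eps -> exists dl, 0 < dl /\ forall x t x' t',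
     Rabs (x - x') < dl -> Rabs (t - t') < dl -> Rabs (F x t - F x' t') < eps).
  { intros eps He. destruct (unif_cont f a b c d Hc eps He) as [dl [Hdl H]].
    exists dl; split; auto. intros x t x' t' H1 H2. unfold F. apply H; try apply clamp_in; auto.
    eapply Rle_lt_trans; [apply clamp_lip|]; auto.
    eapply Rle_lt_trans; [apply clamp_lip|]; auto. }
  assert (Hx : forall t, exists xm, (forall x, a <= x <= b -> F x t <= F xm t) /\ a <= xm <= b).
  { intro t. apply continuity_ab_maj; auto. intros x0 _.
    unfold continuity_pt, continue_in, limit1_in, limit_in; simpl; unfold R_dist.
    intros eps He. destruct (HF eps He) as [dl [Hdl H]]. exists dl; split; auto.
    intros x' [_ Hx']. apply H; auto. rewrite Rminus_eq_0, Rabs_R0; auto. }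
  pose (xm := fun t => proj1_sig (constructive_indefinite_description _ (Hx t))).
  assert (Hxm : forall t, (forall x, a <= x <= b -> F x t <= F (xm t) t) /\ a <= xm t <= b)
    by (intro t; exact (proj2_sig (constructive_indefinite_description _ (Hx t)))).
  pose (m := fun t => F (xm t) t).
  destruct (continuity_ab_maj m c d Hcd) as [ts [Hts Hts']].
  { intros t0 _.
    unfold continuity_pt, continue_in, limit1_in, limit_in; simpl; unfold R_dist.
    intros eps He. destruct (HF (eps/2)) as [dl [Hdl H]]. lra. exists dl; split; auto.
    intros t [_ Ht]. unfold m.
    destruct (Hxm t) as [A1 A2]. destruct (Hxm t0) as [B1 B2].
    assert (C1 := H (xm t) t (xm t) t0 ltac:(rewrite Rminus_eq_0, Rabs_R0; auto) Ht).
    assert (C2 := H (xm t0) t (xm t0) t0 ltac:(rewrite Rminus_eq_0, Rabs_R0; auto) Ht).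
    assert (D1 := A1 (xm t0) B2). assert (D2 := B1 (xm t) A2).
    revert C1 C2. split_Rabs; intros; lra. }
  exists (clamp a b (xm ts)), (clamp c d ts). split; [apply clamp_in; auto|]. split; [apply clamp_in; auto|].
  intros x t Hxx Htt.
  assert (E1 := proj1 (Hxm t) x Hxx). assert (E2 := Hts t Htt).
  unfold m, F in *. rewrite (clamp_id a b x Hxx), (clamp_id c d t Htt) in E1.
  rewrite (clamp_id c d t Htt) in E2. lra.
Qed.

Lemma maxp (a s g0 : R) (w wx wt : R -> R -> R) :
  0 <= a -> 0 <= g0 <= 1 ->
  cont_on in_dom w ->
  (forall x t, 0 <= x <= 1 -> 0 < t -> is_pderiv_x w x t (wx x t)) ->
  (forall x t, 0 <= x <= 1 -> 0 < t -> is_derive (fun r => w x r) t (wt x t)) ->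
  (forall x t, 0 <= x <= 1 -> 0 < t ->
     wt x t + s * (1 - x) * x * wx x t - a * (w (x + g0 * (1 - x)) t - w x t) <= 0) ->
  (forall x, 0 <= x <= 1 -> w x 0 <= 0) ->
  forall x t, 0 <= x <= 1 -> 0 <= t -> w x t <= 0.
Proof.
  intros Ha Hg Hc Hwx Hwt Heq H0 x0 t0 Hx0 Ht0.
  apply Rnot_lt_le; intro Hpos.
  assert (Ht0' : 0 < t0).
  { destruct Ht0 as [|<-]; auto. specialize (H0 x0 Hx0). lra. }
  set (eps := w x0 t0 / (2 * (t0 + 1))).
  assert (Heps : 0 < eps) by (unfold eps; apply Rdiv_lt_0_compat; lra).
  assert (Heps2 : eps * t0 < w x0 t0).
  { unfold eps. apply Rmult_lt_reg_r with (2 * (t0 + 1)). lra.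
    field_simplify; try lra. nra. }
  set (wt_ := fun y r => 0 + 1 * w y r + (- eps) * r).
  assert (Hct : cont_on (fun x t => 0 <= x <= 1 /\ 0 <= t <= t0) wt_).
  { apply cont_on_mono with in_dom. apply cont_on_lin; auto.
    intros y r _ e He. exists e; split; auto.
    unfold in_dom; intros; tauto. }
  destruct (evt2 wt_ 0 1 0 t0 ltac:(lra) ltac:(lra) Hct) as [xs [ts [Hxs [Hts Hmax]]]].
  unfold wt_ in Hmax.
  assert (Hm0 := Hmax x0 t0 Hx0 ltac:(lra)).
  assert (Htsp : 0 < ts).
  { destruct (proj1 Hts) as [|<-]; auto. specialize (H0 xs Hxs). lra. }
  assert (Hsame : forall y, 0 <= y <= 1 -> w y ts <= w xs ts).
  { intros y Hy. specialize (Hmax y ts Hy Hts). lra. }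
  assert (Hdt : eps <= wt xs ts).
  { apply Rnot_lt_le; intro Hlt.
    assert (D := proj1 (is_derive_Reals _ _ _) (Hwt xs ts Hxs Htsp)).
    destruct (D (eps - wt xs ts) ltac:(lra)) as [dl Hdl].
    set (h := - Rmin (dl / 2) (ts / 2)).
    assert (Hh1 : h < 0) by (unfold h; assert (0 < Rmin (dl/2) (ts/2)) by (apply Rmin_pos; pose proof (cond_pos dl); lra); lra).
    assert (Hh2 : Rabs h < dl).
    { rewrite Rabs_left; auto. unfold h. pose proof (Rmin_l (dl/2) (ts/2)). pose proof (cond_pos dl). lra. }
    assert (Hh3 : 0 <= ts + h) by (unfold h; pose proof (Rmin_r (dl/2) (ts/2)); lra).
    specialize (Hdl h ltac:(lra) Hh2).
    specialize (Hmax xs (ts + h) Hxs ltac:(lra)).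
    assert (Q : eps <= (w xs (ts + h) - w xs ts) / h).
    { apply Rmult_le_reg_r with (- h). lra.
      replace ((w xs (ts + h) - w xs ts) / h * - h) with (w xs ts - w xs (ts + h)) by (field; lra).
      nra. }
    revert Hdl. split_Rabs; intros; lra. }
  assert (Hdx : (1 - xs) * xs * wx xs ts = 0).
  { destruct (Req_dec xs 0) as [->|Hn0]. ring.
    destruct (Req_dec xs 1) as [->|Hn1]. ring.
    assert (wx xs ts = 0); [|rewrite H; ring].
    assert (D := Hwx xs ts Hxs Htsp).
    apply Rle_antisym.
    - apply Rnot_lt_le; intro Hlt.
      destruct (D (wx xs ts) Hlt) as [dl [Hdl Hd]].
      set (y := xs + Rmin (dl/2) ((1 - xs)/2)).
      assert (0 < Rmin (dl/2) ((1 - xs)/2)) by (apply Rmin_pos; lra).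
      pose proof (Rmin_l (dl/2) ((1 - xs)/2)). pose proof (Rmin_r (dl/2) ((1 - xs)/2)).
      assert (Hy : 0 <= y <= 1) by (unfold y; lra).
      specialize (Hd y Hy ltac:(unfold y; lra) ltac:(unfold y; rewrite Rabs_right; lra)).
      assert (Q : (w y ts - w xs ts) / (y - xs) <= 0).
      { apply Rmult_le_reg_r with (y - xs). unfold y; lra.
        replace ((w y ts - w xs ts) / (y - xs) * (y - xs)) with (w y ts - w xs ts) by (field; unfold y; lra).
        specialize (Hsame y Hy). lra. }
      revert Hd. split_Rabs; intros; lra.
    - apply Rnot_lt_le; intro Hlt.
      destruct (D (- wx xs ts) ltac:(lra)) as [dl [Hdl Hd]].
      set (y := xs - Rmin (dl/2) (xs/2)).
      assert (0 < Rmin (dl/2) (xs/2)) by (apply Rmin_pos; lra).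
      pose proof (Rmin_l (dl/2) (xs/2)). pose proof (Rmin_r (dl/2) (xs/2)).
      assert (Hy : 0 <= y <= 1) by (unfold y; lra).
      specialize (Hd y Hy ltac:(unfold y; lra) ltac:(unfold y; rewrite Rabs_left; lra)).
      assert (Q : 0 <= (w y ts - w xs ts) / (y - xs)).
      { apply Rmult_le_reg_r with (xs - y). unfold y; lra.
        replace ((w y ts - w xs ts) / (y - xs) * (xs - y)) with (w xs ts - w y ts) by (field; unfold y; lra).
        specialize (Hsame y Hy). lra. }
      revert Hd. split_Rabs; intros; lra. }
  assert (Hj : w (xs + g0 * (1 - xs)) ts <= w xs ts).
  { apply Hsame. nra. }
  specialize (Heq xs ts Hxs Htsp).
  replace (s * (1 - xs) * xs * wx xs ts) with (s * ((1 - xs) * xs * wx xs ts)) in Heq by ring.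
  rewrite Hdx in Heq.
  assert (a * (w (xs + g0 * (1 - xs)) ts - w xs ts) <= 0) by nra.
  lra.
Qed.

Lemma pderiv_lin (u m : R -> R -> R) x t d1 d2 c p q :
  is_pderiv_x u x t d1 -> is_pderiv_x m x t d2 ->
  is_pderiv_x (fun y s => c + p * u y s + q * m y s) x t (p * d1 + q * d2).
Proof.
  intros Hu Hm eps He.
  set (e' := eps / (Rabs p + Rabs q + 1)).
  assert (Hpos : 0 < Rabs p + Rabs q + 1) by (pose proof (Rabs_pos p); pose proof (Rabs_pos q); lra).
  assert (He' : 0 < e') by (unfold e'; apply Rdiv_lt_0_compat; lra).
  destruct (Hu e' He') as [d1' [Hd1 H1]].
  destruct (Hm e' He') as [d2' [Hd2 H2]].
  exists (Rmin d1' d2'); split. apply Rmin_pos; auto.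
  intros y Hy Hyx Hd.
  assert (A1 := H1 y Hy Hyx (Rlt_le_trans _ _ _ Hd (Rmin_l _ _))).
  assert (A2 := H2 y Hy Hyx (Rlt_le_trans _ _ _ Hd (Rmin_r _ _))).
  assert (y - x <> 0) by lra.
  replace ((c + p * u y t + q * m y t - (c + p * u x t + q * m x t)) / (y - x) - (p * d1 + q * d2))
    with (p * ((u y t - u x t) / (y - x) - d1) + q * ((m y t - m x t) / (y - x) - d2)) by (field; auto).
  eapply Rle_lt_trans. apply Rabs_triang.
  rewrite !Rabs_mult.
  assert (Rabs p * Rabs ((u y t - u x t) / (y - x) - d1) <= Rabs p * e') by (apply Rmult_le_compat_l; [apply Rabs_pos|lra]).
  assert (Rabs q * Rabs ((m y t - m x t) / (y - x) - d2) <= Rabs q * e') by (apply Rmult_le_compat_l; [apply Rabs_pos|lra]).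
  assert (e' * (Rabs p + Rabs q + 1) = eps) by (unfold e'; field; lra).
  nra.
Qed.

Lemma derive_pderiv (m : R -> R -> R) x t d : is_derive (fun y => m y t) x d -> is_pderiv_x m x t d.
Proof.
  intros H eps He. destruct (proj1 (is_derive_Reals _ _ _) H eps He) as [dl Hdl].
  exists dl; split. apply cond_pos. intros y _ Hyx Hd.
  specialize (Hdl (y - x) ltac:(lra) Hd). replace (x + (y - x)) with y in Hdl by ring. auto.
Qed.

Lemma derive_lin (u m : R -> R -> R) x t d1 d2 c p q :
  is_derive (fun r => u x r) t d1 -> is_derive (fun r => m x r) t d2 ->
  is_derive (fun r => c + p * u x r + q * m x r) t (p * d1 + q * d2).
Proof.
  intros H1 H2. apply is_derive_Reals. apply is_derive_Reals in H1. apply is_derive_Reals in H2.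
  replace (p * d1 + q * d2) with (0 + p * d1 + q * d2) by ring.
  apply (derivable_pt_lim_plus (fun r => c + p * u x r) (fun r => q * m x r)).
  apply (derivable_pt_lim_plus (fun r => c) (fun r => p * u x r)). apply derivable_pt_lim_const.
  apply (derivable_pt_lim_scal (fun r => u x r)); auto. apply (derivable_pt_lim_scal (fun r => m x r)); auto.
Qed.


Lemma M_dt (A C : R -> R) k s x t :
  (forall t, is_derive A t (k * A t)) -> (forall t, is_derive C t (s * A t)) ->
  A t + (1 - x) * C t <> 0 ->
  is_derive (fun r => (1 - x) / (A r + (1 - x) * C r)) t
    (- (1 - x) * (k * A t + (1 - x) * s * A t) / (A t + (1 - x) * C t) ^ 2).
Proof.
  intros HA HC Hd. auto_derive.
  - split. exists (k * A t); apply HA. split. exists (s * A t); apply HC. auto.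
  - replace (Derive (fun x0 : R => A x0) t) with (k * A t) by (symmetry; apply is_derive_unique; apply HA).
    replace (Derive (fun x0 : R => C x0) t) with (s * A t) by (symmetry; apply is_derive_unique; apply HC). field; auto.
Qed.

Lemma M_dx (a c x : R) :
  a + (1 - x) * c <> 0 ->
  is_derive (fun y => (1 - y) / (a + (1 - y) * c)) x (- a / (a + (1 - x) * c) ^ 2).
Proof.
  intros Hd. auto_derive. auto. field; auto.
Qed.

Lemma cont_conv (g : R -> R -> R) (S : R -> R -> Prop) :
  (forall x t, S x t -> continuous (fun p : R * R => g (fst p) (snd p)) (x, t)) ->
  cont_on S g.
Proof.
  intros H x t Hs eps He.
  specialize (H x t Hs). apply filterlim_locally with (eps := mkposreal eps He) in H.
  destruct H as [d Hd]. exists d; split. apply cond_pos.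
  intros y s _ H1 H2. apply (Hd (y, s)). split; simpl; auto.
Qed.

Lemma cplus (f g : R*R -> R) p : continuous f p -> continuous g p -> continuous (fun q => f q + g q) p.
Proof. intros H1 H2. exact (@continuous_plus _ R_AbsRing R_NormedModule f g p H1 H2). Qed.
Lemma cmult (f g : R*R -> R) p : continuous f p -> continuous g p -> continuous (fun q => f q * g q) p.
Proof. intros H1 H2. exact (@continuous_mult _ R_AbsRing f g p H1 H2). Qed.
Lemma copp (f : R*R -> R) p : continuous f p -> continuous (fun q => - f q) p.
Proof. intros H1. exact (@continuous_opp _ R_AbsRing R_NormedModule f p H1). Qed.

Lemma M_cont (A C : R -> R) k s x t :
  (forall t, is_derive A t (k * A t)) -> (forall t, is_derive C t (s * A t)) ->
  A t + (1 - x) * C t <> 0 ->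
  continuous (fun p : R * R => (1 - fst p) / (A (snd p) + (1 - fst p) * C (snd p))) (x, t).
Proof.
  intros HA HC Hd.
  assert (cA : continuous (fun p : R * R => A (snd p)) (x, t)).
  { apply (continuous_comp snd A). apply continuous_snd. simpl. assert (Hc := ex_derive_continuous A t (ex_intro _ _ (HA t))). exact Hc. }
  assert (cC : continuous (fun p : R * R => C (snd p)) (x, t)).
  { apply (continuous_comp snd C). apply continuous_snd. simpl. assert (Hc := ex_derive_continuous C t (ex_intro _ _ (HC t))). exact Hc. }
  assert (c1 : continuous (fun p : R * R => 1 - fst p) (x, t)).
  { apply (cplus (fun _ => 1) (fun p => - fst p)). apply continuous_const. apply copp. apply continuous_fst. }
  assert (cD : continuous (fun p : R * R => A (snd p) + (1 - fst p) * C (snd p)) (x, t)).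
  { apply (cplus (fun p => A (snd p)) (fun p => (1 - fst p) * C (snd p))). auto.
    apply (cmult (fun p => 1 - fst p) (fun p => C (snd p))); auto. }
  apply (cmult (fun p => 1 - fst p) (fun p => / (A (snd p) + (1 - fst p) * C (snd p)))); auto.
  apply (continuous_comp (fun p : R * R => A (snd p) + (1 - fst p) * C (snd p)) Rinv). auto.
  apply continuous_Rinv. simpl. auto.
Qed.

Lemma PM_formula (a g0 s A C x Ad Cd : R) :
  Ad = (a * g0 - s) * A -> Cd = s * A ->
  A + (1 - x) * C <> 0 -> A + (1 - (x + g0 * (1 - x))) * C <> 0 ->
  - (1 - x) * (Ad + (1 - x) * Cd) / (A + (1 - x) * C) ^ 2
  + s * (1 - x) * x * (- A / (A + (1 - x) * C) ^ 2)
  - a * ((1 - (x + g0 * (1 - x))) / (A + (1 - (x + g0 * (1 - x))) * C)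
         - (1 - x) / (A + (1 - x) * C))
  = a * g0 ^ 2 * A * (1 - x) ^ 2 * C / ((A + (1 - (x + g0 * (1 - x))) * C) * (A + (1 - x) * C) ^ 2).
Proof. intros -> -> H1 H2. field. auto. Qed.

Lemma main_cmp (s a g0 : R) (u ux ut : R -> R -> R) (A C : R -> R) :
  0 < s -> 0 <= a -> 0 < g0 <= 1 ->
  cont_on in_dom u ->
  (forall x t, 0 <= x <= 1 -> 0 < t -> is_pderiv_x u x t (ux x t)) ->
  (forall x t, 0 <= x <= 1 -> 0 < t -> is_derive (fun r => u x r) t (ut x t)) ->
  (forall x t, 0 <= x <= 1 -> 0 < t ->
     ut x t + s * (1 - x) * x * ux x t = a * (u (x + g0 * (1 - x)) t - u x t)) ->
  (forall x, 0 <= x <= 1 -> u x 0 = x) ->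
  (forall t, is_derive A t ((a * g0 - s) * A t)) -> (forall t, is_derive C t (s * A t)) ->
  A 0 = 1 -> C 0 = 0 -> (forall t, 0 <= t -> 1 <= A t) -> (forall t, 0 <= t -> 0 <= C t) ->
  forall x t, 0 <= x <= 1 -> 0 <= t ->
    u x t <= 1 /\ 1 - (1 - x) / (A t + (1 - x) * C t) <= u x t.
Proof.
  intros Hs Ha Hg Hcu Hux Hut Heq H0 HA HC HA0 HC0 HAp HCp x t Hx Ht.
  split.
  - assert (W := maxp a s g0 (fun y r => -1 + 1 * u y r + 0 * u y r)
       (fun y r => 1 * ux y r + 0 * ux y r) (fun y r => 1 * ut y r + 0 * ut y r) Ha ltac:(lra)).
    assert (W' : -1 + 1 * u x t + 0 * u x t <= 0); [|lra].
    apply W; auto.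
    + apply cont_on_lin; auto.
    + intros; apply pderiv_lin; auto.
    + intros; apply derive_lin; auto.
    + intros y r Hy Hr. specialize (Heq y r Hy Hr). simpl.
      replace (1 * ut y r + 0 * ut y r + s * (1 - y) * y * (1 * ux y r + 0 * ux y r) -
        a * (-1 + 1 * u (y + g0 * (1 - y)) r + 0 * u (y + g0 * (1 - y)) r - (-1 + 1 * u y r + 0 * u y r)))
       with (ut y r + s * (1 - y) * y * ux y r - a * (u (y + g0 * (1 - y)) r - u y r)) by ring.
      lra.
    + intros y Hy. simpl. rewrite H0; auto. lra.
  - set (M := fun y r => (1 - y) / (A r + (1 - y) * C r)).
    assert (HD : forall y r, 0 <= y <= 1 -> 0 <= r -> 1 <= A r + (1 - y) * C r).
    { intros y r Hy Hr. specialize (HAp r Hr). specialize (HCp r Hr). nra. }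
    assert (W := maxp a s g0 (fun y r => 1 + (-1) * u y r + (-1) * M y r)
       (fun y r => (-1) * ux y r + (-1) * (- A r / (A r + (1 - y) * C r) ^ 2))
       (fun y r => (-1) * ut y r + (-1) * (- (1 - y) * ((a * g0 - s) * A r + (1 - y) * s * A r) / (A r + (1 - y) * C r) ^ 2))
       Ha ltac:(lra)).
    assert (W' : 1 + (-1) * u x t + (-1) * M x t <= 0); [|unfold M in W'; lra].
    apply W; auto.
    + apply cont_on_lin; auto. apply cont_conv. intros y r [Hy Hr]. apply (M_cont A C (a * g0 - s) s); auto.
      specialize (HD y r Hy Hr). lra.
    + intros y r Hy Hr. apply pderiv_lin; auto. apply derive_pderiv. unfold M. apply M_dx.
      specialize (HD y r Hy ltac:(lra)). lra.
    + intros y r Hy Hr. apply derive_lin; auto. unfold M. apply M_dt; auto.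
      specialize (HD y r Hy ltac:(lra)). lra.
    + intros y r Hy Hr. specialize (Heq y r Hy Hr). simpl.
      assert (Hy' : 0 <= y + g0 * (1 - y) <= 1) by nra.
      assert (D1 := HD _ r Hy' ltac:(lra)). assert (D2 := HD _ r Hy ltac:(lra)).
      assert (PM := PM_formula a g0 s (A r) (C r) y ((a * g0 - s) * A r) (s * A r) eq_refl eq_refl ltac:(lra) ltac:(lra)).
      assert (Hnn : 0 <= a * g0 ^ 2 * A r * (1 - y) ^ 2 * C r / ((A r + (1 - (y + g0 * (1 - y))) * C r) * (A r + (1 - y) * C r) ^ 2)).
      { apply Rmult_le_pos. 
        - specialize (HAp r ltac:(lra)). specialize (HCp r ltac:(lra)).
          apply Rmult_le_pos; [|auto]. apply Rmult_le_pos; [|apply pow2_ge_0].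
          apply Rmult_le_pos; [|lra]. apply Rmult_le_pos; [auto|apply pow2_ge_0].
        - left. apply Rinv_0_lt_compat. apply Rmult_lt_0_compat. lra. apply pow_lt. lra. }
      unfold M.
      match goal with |- ?L <= 0 => replace L with
        (- (ut y r + s * (1 - y) * y * ux y r - a * (u (y + g0 * (1 - y)) r - u y r))
         - ( - (1 - y) * ((a * g0 - s) * A r + (1 - y) * (s * A r)) / (A r + (1 - y) * C r) ^ 2
  + s * (1 - y) * y * (- A r / (A r + (1 - y) * C r) ^ 2)
  - a * ((1 - (y + g0 * (1 - y))) / (A r + (1 - (y + g0 * (1 - y))) * C r)
         - (1 - y) / (A r + (1 - y) * C r)))) end.
      2:{ field. lra. }
      rewrite PM. lra.
    + intros y Hy. simpl. unfold M. rewrite H0, HA0, HC0; auto.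
      replace (1 + (1 - y) * 0) with 1 by ring. lra.
Qed.

Lemma lim_from_bounds (f : R -> R) (s : R) : 0 < s ->
  (forall t, 0 <= t -> f t <= 1 /\ 1 - 1 / (1 + s * t) <= f t) ->
  is_lim f p_infty 1.
Proof.
  intros Hs Hb. unfold is_lim. simpl. apply filterlim_locally. intros eps.
  pose proof (cond_pos eps) as He.
  exists (Rmax 0 (1 / (s * eps))). intros t Ht.
  assert (Ht0 : 0 < t) by (pose proof (Rmax_l 0 (1 / (s * eps))); lra).
  assert (Ht1 : 1 / (s * eps) < t) by (pose proof (Rmax_r 0 (1 / (s * eps))); lra).
  destruct (Hb t ltac:(lra)) as [B1 B2].
  assert (1 / (1 + s * t) < eps).
  { assert (1 < s * eps * t).
    { apply Rmult_lt_reg_l with (/ (s * eps)). apply Rinv_0_lt_compat; nra.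
      field_simplify; try nra. }
    apply Rmult_lt_reg_r with (1 + s * t). nra. field_simplify; nra. }
  unfold ball; simpl; unfold AbsRing_ball, abs, minus, plus, opp; simpl.
  rewrite Rabs_left1; lra.
Qed.

Theorem proposition4p9 (f0 f1 l0 l1 g0 g1 : R) (u : R -> R -> R) :
  0 < f0 -> 0 <= f1 -> 0 < f0 - f1 ->
  0 <= l0 -> 0 <= l1 ->
  0 < g0 <= 1 -> 0 < g1 <= 1 ->
  is_solution f0 f1 l0 l1 g0 g1 u ->
  l1 * g1 = 0 ->
  l0 * g0 >= (f0 - f1) / f0 ->
  (forall x, 0 <= x <= 1 -> is_lim (fun t => u x t) p_infty 1) /\
  (forall x t, 0 <= x <= 1 -> 0 <= t ->
     u x t <= 1 /\
     (l0 * g0 > (f0 - f1) / f0 ->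
        u x t >= 1 - (1 - x) /
          (1 + (f0 - f1) * (1 - x) / (l0 * g0 * f0 - (f0 - f1))
                 * (exp ((l0 * g0 * f0 - (f0 - f1)) * t) - 1))) /\
     (l0 * g0 = (f0 - f1) / f0 ->
        u x t >= 1 - (1 - x) / (1 + (f0 - f1) * (1 - x) * t))).
Proof.
  intros Hf0 Hf1 Hs Hl0 Hl1 Hg0 Hg1 Hsol Hm1 Hm0.
  destruct Hsol as [ux [ut [Hcu [_ [_ [Hux [Hut [Heq H0]]]]]]]].
  assert (Hl1z : l1 = 0) by (destruct (Rmult_integral _ _ Hm1); [auto|lra]).
  set (s := f0 - f1). set (k := l0 * g0 * f0 - s). assert (Hs2 : 0 < s) by (unfold s; lra).
  assert (Heq' : forall x t, 0 <= x <= 1 -> 0 < t ->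
     ut x t + s * (1 - x) * x * ux x t = (l0 * f0) * (u (x + g0 * (1 - x)) t - u x t)).
  { intros x t Hx Ht. unfold s. rewrite (Heq x t Hx Ht), Hl1z. unfold J0. ring. }
  assert (Ha : 0 <= l0 * f0) by nra.
  assert (Hkeq : l0 * f0 * g0 - s = k) by (unfold k; ring).
  assert (Hk : 0 <= k).
  { unfold k. apply Rge_le in Hm0. apply Rmult_le_compat_r with (r := f0) in Hm0; [|lra].
    unfold s in *. replace ((f0 - f1) / f0 * f0) with (f0 - f1) in Hm0 by (field; lra). lra. }
  assert (Gen : forall A C : R -> R,
    (forall t, is_derive A t (k * A t)) -> (forall t, is_derive C t (s * A t)) ->
    A 0 = 1 -> C 0 = 0 -> (forall t, 0 <= t -> 1 <= A t) -> (forall t, 0 <= t -> s * t <= C t) ->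
    (forall x, 0 <= x <= 1 -> is_lim (fun t => u x t) p_infty 1) /\
    (forall x t, 0 <= x <= 1 -> 0 <= t -> u x t <= 1 /\ 1 - (1 - x) / (A t + (1 - x) * C t) <= u x t)).
  { intros A C HA HC HA0 HC0 HAp HCs.
    assert (HCp : forall t, 0 <= t -> 0 <= C t) by (intros t Ht; specialize (HCs t Ht); nra).
    assert (HB : forall x t, 0 <= x <= 1 -> 0 <= t -> u x t <= 1 /\ 1 - (1 - x) / (A t + (1 - x) * C t) <= u x t).
    { intros x t Hx Ht. apply (main_cmp s (l0 * f0) g0 u ux ut A C); auto.
      - intro r. rewrite Hkeq. auto. }
    split; auto.
    intros x Hx. apply (lim_from_bounds _ s Hs2). intros t Ht.
    destruct (HB x t Hx Ht) as [B1 B2]. split; auto.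
    specialize (HAp t Ht). specialize (HCs t Ht).
    assert (P1 : 0 <= s * t) by nra.
    assert (P2 : 0 <= (1 - x) * C t) by (apply Rmult_le_pos; lra).
    assert (P3 : (1 - x) * (s * t) <= (1 - x) * C t) by (apply Rmult_le_compat_l; lra).
    assert ((1 - x) / (A t + (1 - x) * C t) <= 1 / (1 + s * t)); [|lra].
    unfold Rdiv. apply Rmult_le_reg_r with ((A t + (1 - x) * C t) * (1 + s * t)). nra.
    replace ((1 - x) * / (A t + (1 - x) * C t) * ((A t + (1 - x) * C t) * (1 + s * t)))
      with ((1 - x) * (1 + s * t)) by (field; nra).
    replace (1 * / (1 + s * t) * ((A t + (1 - x) * C t) * (1 + s * t)))
      with (A t + (1 - x) * C t) by (field; nra).
    nra. }
  destruct Hk as [Hkp | Hk0].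
  - destruct (Gen (fun t => exp (k * t)) (fun t => s * (exp (k * t) - 1) / k)) as [L B].
    + intro t. auto_derive; auto. ring.
    + intro t. auto_derive; auto. field. lra.
    + rewrite Rmult_0_r, exp_0. auto.
    + simpl. rewrite Rmult_0_r, exp_0. field. lra.
    + intros t Ht. pose proof (exp_ineq1_le (k * t)). nra.
    + intros t Ht. pose proof (exp_ineq1_le (k * t)).
      apply Rmult_le_reg_r with k; auto. field_simplify; try lra. nra.
    + split; auto. intros x t Hx Ht. destruct (B x t Hx Ht) as [B1 B2]. split; auto. split.
      * intros _. fold s k. apply Rle_ge.
        pose proof (exp_ineq1_le (k * t)).
        assert (E1 : 0 <= s * (1 - x) / k * (exp (k * t) - 1)).
        { apply Rmult_le_pos; [|nra]. apply Rmult_le_pos; [nra|]. left; apply Rinv_0_lt_compat; auto. }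
        assert (E2 : (1 - x) / (exp (k * t) + (1 - x) * (s * (exp (k * t) - 1) / k))
                     <= (1 - x) / (1 + s * (1 - x) / k * (exp (k * t) - 1))); [|lra].
        unfold Rdiv. apply Rmult_le_compat_l. lra.
        apply Rinv_le_contravar. lra.
        replace ((1 - x) * (s * (exp (k * t) - 1) * / k)) with (s * (1 - x) * / k * (exp (k * t) - 1)) by ring.
        unfold Rdiv in E1. nra.
      * intro Heq0. exfalso. unfold s in Heq0. apply Rmult_eq_compat_r with (r := f0) in Heq0.
        replace ((f0 - f1) / f0 * f0) with (f0 - f1) in Heq0 by (field; lra).
        unfold k, s in Hkp. lra.
  - destruct (Gen (fun _ => 1) (fun t => s * t)) as [L B].
    + intro t. auto_derive; auto. rewrite <- Hk0. ring.
    + intro t. auto_derive; auto. ring.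
    + auto.
    + ring.
    + intros; lra.
    + intros; lra.
    + split; auto. intros x t Hx Ht. destruct (B x t Hx Ht) as [B1 B2]. split; auto. split.
      * intro Hgt. exfalso. unfold s in Hgt. apply Rgt_lt in Hgt. apply Rmult_lt_compat_r with (r := f0) in Hgt; [|lra].
        replace ((f0 - f1) / f0 * f0) with (f0 - f1) in Hgt by (field; lra).
        unfold k, s in Hk0. lra.
      * intros _. fold s. apply Rle_ge.
        replace (1 + s * (1 - x) * t) with (1 + (1 - x) * (s * t)) by ring. auto.
Qed.
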